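(* Let $\mathcal{A}$ be a finite real linear hyperplane arrangement, $B$ a region, and $\Delta\subseteq\Sigma[\mathcal{A}]$ a nonempty polyhedral subcomplex. Let $\operatorname{Des}_B(\Delta)=\{F\in\Sigma[\mathcal{A}]: F\overline{B}\in\Delta\}$ and $\mathcal{R}(\Delta)=\Delta\cap\mathcal{R}[\mathcal{A}]$. Then $\operatorname{Des}_B(\Delta)=\Delta$ if and only if $\Delta$ is pure and $\mathcal{R}(\Delta)$ is a nonempty upper set of the partial order $\preceq_B$.
   Context: $\Sigma[\mathcal{A}]$ is the set of faces of $\mathcal{A}$ (faces of the regions, which are closures of connected components of the complement of $\bigcup\mathcal{A}$), and $\mathcal{R}[\mathcal{A}]$ is the set of regions. A polyhedral subcomplex is a subset of $\Sigma[\mathcal{A}]$ closed under taking faces; it is pure if all its maximal elements have the same dimension. For each $\mathrm{H}\in\mathcal{A}$ fix halfspaces $\mathrm{H}^\pm$; the sign sequence $\sigma_{\mathrm{H}}(F)\in\{0,+,-\}$ records whether $F\subseteq \mathrm{H}$, or $F$ lies in $\mathrm{H}^+$ resp. $\mathrm{H}^-$ but not in $\mathrm{H}$. The Tits product $FG$ is the face with $\sigma_{\mathrm{H}}(FG)=\sigma_{\mathrm{H}}(F)$ if nonzero, else $\sigma_{\mathrm{H}}(G)$. $\overline{B}=-B$. The weak order with base region $B$: $C\preceq_B D$ iff the set of hyperplanes separating $B$ and $C$ is contained in the set separating $B$ and $D$. *)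

(* Defs.v *)
(* A real linear arrangement of m hyperplanes in R^n is given
   by a matrix A : 'M[R]_(m,n) whose i-th row is a normal vector a_i of the
   hyperplane H_i = {x | a_i x = 0}; H_i^+ = {a_i x >= 0}, H_i^- = {a_i x <= 0}.
   Faces are identified with their sign sequences (sigma_H(F))_H. *)
From HB Require Import structures.
From mathcomp Require Import all_boot all_order all_algebra.
From mathcomp Require Import reals.
Set Implicit Arguments. Unset Strict Implicit. Unset Printing Implicit Defensive.
Import Order.TTheory GRing.Theory Num.Theory.
Local Open Scope ring_scope.

Section Arr.
Variables (R : realType) (m n : nat) (A : 'M[R]_(m, n)).

(* sign sequences, with values in {-1, 0, 1} *)
Definition signseq := {ffun 'I_m -> int}.

Definition sgv (x : 'cV[R]_n) : signseq := [ffun i => sgz ((A *m x) i 0)].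

Definition is_arrangement : Prop :=
  (forall i, row i A != 0) /\
  (forall i j : 'I_m, i != j -> forall c : R, row i A != c *: row j A).

(* Sigma[A]: the faces = the sign sequences realized by points (the closed
   face with sign sequence s is {x | forall i, sgz (a_i x) \in {0, s i}}) *)
Definition is_face (F : signseq) : Prop := exists x, F = sgv x.

Definition is_region (C : signseq) : Prop :=
  is_face C /\ forall i, C i != 0.

(* G is a face of F (G <= F in the face poset, i.e. closed G subset closed F) *)
Definition subface (G F : signseq) : Prop :=
  forall i, G i = 0 \/ G i = F i.

Definition tits (F G : signseq) : signseq :=
  [ffun i => if F i != 0 then F i else G i].

Definition opp_face (F : signseq) : signseq := [ffun i => - F i].

(* dimension of a face: dimension of its linear span
   {x | a_i x = 0 for all i with sigma_i(F) = 0} *)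
Definition zero_rows (F : signseq) : 'M[R]_(m, n) :=
  \matrix_(i, j) (if F i == 0 then A i j else 0).
Definition face_dim (F : signseq) : nat := (n - \rank (zero_rows F))%N.

Definition subcomplex (Delta : signseq -> Prop) : Prop :=
  (forall F, Delta F -> is_face F) /\
  (forall F G, Delta F -> is_face G -> subface G F -> Delta G).

Definition maximal_in (Delta : signseq -> Prop) (F : signseq) : Prop :=
  Delta F /\ forall G, Delta G -> subface F G -> G = F.

Definition pure (Delta : signseq -> Prop) : Prop :=
  forall F G, maximal_in Delta F -> maximal_in Delta G -> face_dim F = face_dim G.

Definition weak_le (B C D : signseq) : Prop :=
  forall i, B i != C i -> B i != D i.

Definition Des (B : signseq) (Delta : signseq -> Prop) (F : signseq) : Prop :=
  is_face F /\ Delta (tits F (opp_face B)).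

Definition regs (Delta : signseq -> Prop) (C : signseq) : Prop :=
  Delta C /\ is_region C.

Definition upper_set (B : signseq) (P : signseq -> Prop) : Prop :=
  forall C D, P C -> is_region D -> weak_le B C D -> P D.

End Arr.

(* Main.v *)
Require Import Defs.
From HB Require Import structures.
From mathcomp Require Import all_boot all_order all_algebra.
From mathcomp Require Import reals.
From mathcomp Require Import lra zify.
From Stdlib Require Import Classical.
Set Implicit Arguments. Unset Strict Implicit. Unset Printing Implicit Defensive.
Import Order.TTheory GRing.Theory Num.Theory.
Local Open Scope ring_scope.

Section S.
Variables (R : realType) (m n : nat) (A : 'M[R]_(m, n)).
Implicit Types F G H C D : signseq m.

Lemma sgz_cases (x : R) :
  (0 < x /\ sgz x = 1) \/ (x < 0 /\ sgz x = -1) \/ (x = 0 /\ sgz x = 0).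
Proof.
have [h|h|->] := ltgtP x 0.
- by right; left; rewrite ltr0_sgz.
- by left; rewrite gtr0_sgz.
- by right; right; rewrite sgz0.
Qed.

Lemma argmin_ex (P : pred 'I_m) (t : 'I_m -> R) :
  (exists i, P i) -> exists i0, P i0 /\ forall j, P j -> t i0 <= t j.
Proof.
case=> i Pi.
case: (@arg_minP _ _ _ i P t Pi) => j Pj H.
by exists j; split.
Qed.

Lemma face_vals F : is_face A F -> forall i, F i = -1 \/ F i = 0 \/ F i = 1.
Proof.
case=> x ->{F} i; rewrite ffunE.
case: (sgz_cases ((A *m x) i 0)) => [[_ ->]|[[_ ->]|[_ ->]]]; auto.
Qed.

Lemma subface_tits F G : subface F (tits F G).
Proof. move=> i; rewrite ffunE; case: eqP => [->|_]; [by left|by right]. Qed.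

Lemma subface_trans F G H : subface F G -> subface G H -> subface F H.
Proof.
move=> h1 h2 i; case: (h1 i) => [->|->]; first by left.
by case: (h2 i) => [->|->]; [left|right].
Qed.

Lemma region_max C G : is_region A C -> subface C G -> G = C.
Proof.
case=> _ nz h; apply/ffunP=> i; case: (h i) => [e|->] //.
by move: (nz i); rewrite e eqxx.
Qed.

Lemma region_dim C : is_region A C -> face_dim A C = n.
Proof.
case=> _ nz; rewrite /face_dim.
have -> : zero_rows A C = 0.
  by apply/matrixP=> i j; rewrite !mxE (negbTE (nz i)).
by rewrite mxrank0 subn0.
Qed.

Lemma dim_region F : is_arrangement A -> is_face A F -> face_dim A F = n -> is_region A F.
Proof.
case=> rnz _ fF; rewrite /face_dim => hd; split => // i.
have hr : \rank (zero_rows A F) = 0%N.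
  have := rank_leq_col (zero_rows A F); lia.
move/eqP: hr; rewrite mxrank_eq0 => /eqP hz.
apply/negP => /eqP Fi; move: (rnz i); apply/negP; rewrite negbK.
apply/eqP/rowP => j; rewrite !mxE.
have := congr1 (fun M : 'M_(m,n) => M i j) hz; rewrite /= !mxE Fi eqxx => ->.
done.
Qed.


Lemma small_common (P : 'I_m -> R -> Prop) :
  (forall i, exists2 e, 0 < e & forall d, 0 < d -> d <= e -> P i d) ->
  exists2 e, 0 < e & forall i, P i e.
Proof.
move=> h.
suff : forall s : seq 'I_m, exists2 e, 0 < e & forall d, 0 < d -> d <= e -> forall i, i \in s -> P i d.
  case/(_ (enum 'I_m)) => e e0 he; exists e => // i; apply: he => //; by rewrite mem_enum.
elim=> [|i s [e e0 he]]; first by exists 1 => //.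
case: (h i) => e' e'0 he'.
exists (Num.min e e'); first by rewrite lt_min e0 e'0.
move=> d d0 dle j; rewrite inE => /orP [/eqP ->|js].
  by apply: he' => //; apply: (le_trans dle); rewrite ge_min lexx orbT.
by apply: he => //; apply: (le_trans dle); rewrite ge_min lexx.
Qed.

Lemma sgz_perturb (a b d : R) : 0 < d -> `|d * b| < `|a| ->
  sgz (a + d * b) = sgz a.
Proof.
move=> d0 h.
case: (sgz_cases a) => [[a0 ->]|[[a0 ->]|[a0 ->]]].
- apply: gtr0_sgz; move: h; rewrite (gtr0_norm a0) => h.
  have h1 := ler_norm (- (d * b)); rewrite normrN in h1.
  lra.
- apply: ltr0_sgz; move: h; rewrite (ltr0_norm a0) => h.
  have h1 := ler_norm (d * b).
  lra.
- by move: h; rewrite a0 normr0 normr_lt0.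
Qed.

Lemma tits_face F G : is_face A F -> is_face A G -> is_face A (tits F G).
Proof.
case=> x ->{F}; case=> y ->{G}.
pose a i := (A *m x) i 0; pose b i := (A *m y) i 0.
have : exists2 e, 0 < e & forall i,
    sgz (a i + e * b i) = if sgz (a i) != 0 then sgz (a i) else sgz (b i).
  apply: small_common => i.
  case: (eqVneq (a i) 0) => ai.
    exists 1 => // d d0 _; rewrite ai sgz0 eqxx add0r sgzM gtr0_sgz // mul1r.
    done.
  exists (`|a i| / (`|b i| + 1)).
    by rewrite divr_gt0 // ?normr_gt0 // ltr_wpDl.
  move=> d d0 dle; rewrite sgz_eq0 ai /=; apply: sgz_perturb => //.
  rewrite normrM (gtr0_norm d0).
  have bp : 0 < `|b i| + 1 by rewrite ltr_wpDl.
  have : d * (`|b i| + 1) <= `|a i| by rewrite -ler_pdivlMr.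
  have : 0 < `|a i| by rewrite normr_gt0.
  nra.
case=> e e0 he; exists (x + e *: y); apply/ffunP => i; rewrite !ffunE.
have := he i; rewrite /a /b => <-.
by rewrite mulmxDr -scalemxAr !mxE.
Qed.

Lemma cross_t (a b : R) : a != 0 -> b != 0 -> sgz a != sgz b ->
  [/\ 0 < a / (a - b), a / (a - b) < 1 & a + a / (a - b) * (b - a) = 0].
Proof.
move=> a0 b0 hs.
have hab : a - b != 0 by apply: contraNneq hs => /eqP; rewrite subr_eq0 => /eqP ->.
have ht : a / (a - b) * (a - b) = a := divfK hab a.
have -> : a + a / (a - b) * (b - a) = a - a / (a - b) * (a - b).
  by rewrite -(opprB a b) mulrN.
rewrite ht subrr; set t := a / (a - b) in ht *.
move: hs; case: (sgz_cases a) => [[ap ->]|[[an ->]|[az _]]]; last by move/eqP: a0.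
- case: (sgz_cases b) => [[bp ->]|[[bn ->]|[bz _]]] //; last by move/eqP: b0.
  move=> _; split => //.
    by apply/negPn/negP; rewrite -leNgt => tle; nra.
  by apply/negPn/negP; rewrite -leNgt => tle; nra.
- case: (sgz_cases b) => [[bp ->]|[[bn ->]|[bz _]]] //; last by move/eqP: b0.
  move=> _; split => //.
    by apply/negPn/negP; rewrite -leNgt => tle; nra.
  by apply/negPn/negP; rewrite -leNgt => tle; nra.
Qed.

Lemma cross_val (a b t0 : R) : a != 0 -> b != 0 -> 0 < t0 -> t0 < 1 ->
  (sgz a != sgz b -> t0 <= a / (a - b)) ->
  (sgz (a + t0 * (b - a)) = 0 \/ sgz (a + t0 * (b - a)) = sgz a) /\
  (sgz (a + t0 * (b - a)) = 0 -> sgz a != sgz b).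
Proof.
move=> a0 b0 t0p t01 hle.
case: (eqVneq (sgz a) (sgz b)) => hs.
  have : a + t0 * (b - a) != 0 /\ sgz (a + t0 * (b - a)) = sgz a.
    move: hs; case: (sgz_cases a) => [[ap ->]|[[an ->]|[az _]]]; last by move/eqP: a0.
    + case: (sgz_cases b) => [[bp _]|[[bn ->]|[bz ->]]] // _.
      have hp : 0 < a + t0 * (b - a) by nra.
      by rewrite gtr0_sgz // gt_eqF.
    + case: (sgz_cases b) => [[bp ->]|[[bn _]|[bz ->]]] // _.
      have hp : a + t0 * (b - a) < 0 by nra.
      by rewrite ltr0_sgz // lt_eqF.
  case=> nz ->; split; first by right.
  by move/eqP; rewrite sgz_eq0 (negbTE a0).
split => //.
have [_ _ h0] := cross_t a0 b0 hs.
have tle := hle hs.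
move: h0 tle; set t := a / (a - b) => h0 tle.
move: hs; case: (sgz_cases a) => [[ap ->]|[[an ->]|[az _]]]; last by move/eqP: a0.
- case: (sgz_cases b) => [[bp ->]|[[bn ->]|[bz _]]] //; last by move/eqP: b0.
  move=> _.
  have h1 : 0 <= a + t0 * (b - a) by nra.
  case: (sgz_cases (a + t0 * (b - a))) => [[_ ->]|[[hn _]|[_ ->]]]; auto.
  exfalso; lra.
- case: (sgz_cases b) => [[bp ->]|[[bn ->]|[bz _]]] //; last by move/eqP: b0.
  move=> _.
  have h1 : a + t0 * (b - a) <= 0 by nra.
  case: (sgz_cases (a + t0 * (b - a))) => [[hn _]|[[_ ->]|[_ ->]]]; auto.
  exfalso; lra.
Qed.

Lemma crossing C D : is_region A C -> is_region A D -> (exists i, C i != D i) ->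
  exists G, [/\ is_face A G, subface G C, (exists i, G i = 0) &
                 forall i, G i = 0 -> C i != D i].
Proof.
case=> [[x ->{C}] nzC] [[y ->{D}] nzD] hex.
pose a i := (A *m x) i 0; pose b i := (A *m y) i 0.
have an i : a i != 0 by move: (nzC i); rewrite ffunE sgz_eq0.
have bn i : b i != 0 by move: (nzD i); rewrite ffunE sgz_eq0.
pose S := [pred i | sgz (a i) != sgz (b i)].
pose t i := a i / (a i - b i).
have [i0 [Si0 hmin]] : exists i0, S i0 /\ forall j, S j -> t i0 <= t j.
  apply: argmin_ex; case: hex => i; rewrite !ffunE => h; by exists i.
have [t0p t01 ht0] := cross_t (an i0) (bn i0) Si0.
pose t0 := t i0.
have hz i : (A *m (x + t0 *: (y - x))) i 0 = a i + t0 * (b i - a i).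
  by rewrite mulmxDr -scalemxAr mulmxBr !mxE /a /b !mxE.
have hv i := cross_val (an i) (bn i) t0p t01 (hmin i).
exists (sgv A (x + t0 *: (y - x))); split.
- by exists (x + t0 *: (y - x)).
- move=> i; rewrite !ffunE hz; by case: (hv i) => [[->|->] _]; [left|right].
- by exists i0; rewrite ffunE hz; rewrite ht0 sgz0.
- move=> i; rewrite !ffunE hz => h; by case: (hv i) => _ /(_ h).
Qed.

Lemma exists_maximal (Delta : signseq m -> Prop) F : subcomplex A Delta -> Delta F ->
  exists M, maximal_in Delta M /\ subface F M.
Proof.
move=> hS.
suff : forall k F, (#|[set i | F i == 0]| < k)%N -> Delta F ->
   exists M, maximal_in Delta M /\ subface F M by apply; apply: ltnSn.
elim=> [|k IH] {}F hk hF //.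
case: (classic (maximal_in Delta F)) => hM.
  by exists F; split => // i; right.
have [G [hG [sFG nGF]]] : exists G, Delta G /\ subface F G /\ G <> F.
  apply: NNPP => hn; apply: hM; split => // G hG sFG.
  by apply: NNPP => ne; apply: hn; exists G.
have [M [hMM sGM]] : exists M, maximal_in Delta M /\ subface G M.
  apply: IH hG; rewrite ltnS in hk; apply: (leq_trans _ hk); apply: proper_card; apply/properP; split.
    apply/subsetP => i; rewrite !inE => /eqP Gi; case: (sFG i) => [->|->] //; by rewrite Gi.
  have [i Fi] : exists i, F i != G i.
    apply: NNPP => hn; apply: nGF; apply/ffunP => i.
    by apply/eqP; apply: NNPP => h; apply: hn; exists i; rewrite eq_sym; apply/negP.
  exists i; rewrite !inE.
    by case: (sFG i) => [->|e] //; rewrite e eqxx in Fi.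
  by case: (sFG i) => [e|e]; [rewrite e eq_sym in Fi|rewrite e eqxx in Fi].
by exists M; split => //; apply: subface_trans sGM.
Qed.

Lemma gallery (Delta : signseq m -> Prop) B D : subcomplex A Delta ->
  (forall F, Delta F -> Delta (tits F (opp_face B))) ->
  is_region A B -> is_region A D ->
  forall C, Delta C -> is_region A C -> weak_le B C D -> Delta D.
Proof.
move=> hS hT hB hD.
suff : forall k C, (#|[set i | C i != D i]| < k)%N -> Delta C -> is_region A C ->
  weak_le B C D -> Delta D by move=> h C; apply: h; apply: ltnSn.
elim=> [|k IH] C hk hC rC wCD //.
case: (classic (exists i, C i != D i)) => hex; last first.
  have -> : D = C; last by [].
  apply/ffunP => i; apply/eqP; apply: NNPP => h; apply: hex; exists i.
  by rewrite eq_sym; apply/negP.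
have [G [fG sGC [i0 Gi0] Gz]] := crossing rC hD hex.
have hG : Delta G by apply: hS.2 hC fG sGC.
set C' := tits G (opp_face B).
have hC' : Delta C' by apply: hT.
have Bnz i : B i != 0 by case: hB => _.
have BD i : G i = 0 -> B i != D i.
  move=> Gi; have cd := Gz i Gi; apply/negP => /eqP bd.
  have := wCD i; rewrite bd eqxx /= eq_sym => h.
  by case: (eqVneq (C i) (D i)) => e; [rewrite e eqxx in cd|move: (h e)].
have C'D i : G i = 0 -> C' i = D i.
  move=> Gi; rewrite /C' !ffunE Gi eqxx /=.
  have := BD i Gi; have := Bnz i; have := face_vals hB.1 i; have := face_vals hD.1 i.
  have := (hD.2 i).
  move=> dn hd hb bn bd; move/eqP: bd => bd; move/eqP: bn => bn; move/eqP: dn => dn; lia.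
have C'C i : G i != 0 -> C' i = C i.
  move=> Gi; rewrite /C' !ffunE Gi /=; case: (sGC i) => // e; by rewrite e eqxx in Gi.
apply: (IH C') => //.
- rewrite ltnS in hk; apply: (leq_trans _ hk); apply: proper_card; apply/properP; split.
    apply/subsetP => i; rewrite !inE; case: (eqVneq (G i) 0) => Gi.
      by rewrite C'D // eqxx.
    by rewrite C'C.
  exists i0; rewrite !inE ?C'D ?eqxx //; exact: Gz.
- split; first by apply: hS.1.
  move=> i; rewrite /C' !ffunE; case: ifP => // _; by rewrite oppr_eq0.
- move=> i; case: (eqVneq (G i) 0) => Gi; first by move=> _; apply: BD.
  rewrite C'C //; exact: wCD.
Qed.

End S.

Theorem lemma3p4 (R : realType) (m n : nat) (A : 'M[R]_(m, n))
    (B : signseq m) (Delta : signseq m -> Prop) :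
  is_arrangement A ->
  is_region A B ->
  subcomplex A Delta ->
  (exists F, Delta F) ->
  ((forall F, Des A B Delta F <-> Delta F) <->
   (pure A Delta /\ (exists C, regs A Delta C) /\ upper_set A B (regs A Delta))).
Proof.
move=> hA hB hS [F0 hF0].
have Bnz i : B i != 0 by case: hB => _.
have titsnz F i : tits F (opp_face B) i != 0.
  by rewrite !ffunE; case: ifP => //; rewrite oppr_eq0.
have sub1 F : Des A B Delta F -> Delta F.
  case=> fF hD; exact: hS.2 hD fF (subface_tits _ _).
split.
- move=> hE.
  have hT F : Delta F -> Delta (tits F (opp_face B)) by move=> hF; case: (hE F) => _ /(_ hF) [].
  have maxreg F : maximal_in Delta F -> is_region A F.
    case=> hF hM; have e := hM _ (hT F hF) (subface_tits _ _).
    split; first by apply: hS.1.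
    by move=> i; rewrite -e.
  split; [|split].
  + move=> F G hF hG; by rewrite !region_dim //; apply: maxreg.
  + exists (tits F0 (opp_face B)); split; first by apply: hT.
    by split; [apply: hS.1; apply: hT|].
  + move=> C D [hC rC] rD wCD; split => //.
    exact: (gallery hS hT hB rD hC rC wCD).
- case=> hP [[C0 [hC0 rC0]] hU] F; split; first exact: sub1.
  move=> hF; have fF := hS.1 _ hF; split => //.
  have [M [hM sFM]] := exists_maximal hS hF.
  have C0M : maximal_in Delta C0 by split => // G _ s; exact: region_max rC0 s.
  have rM : is_region A M.
    apply: dim_region hA (hS.1 _ hM.1) _.
    by rewrite (hP _ _ hM C0M) region_dim.
  have fB : is_face A (opp_face B).
    case: hB => [[b ->] _]; exists (- b); apply/ffunP => i.
    rewrite !ffunE; have -> : (A *m - b) i 0 = - ((A *m b) i 0) by rewrite mulmxN mxE.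
    by rewrite sgzN.
  have rT : is_region A (tits F (opp_face B)).
    by split; [apply: tits_face|].
  suff /(hU M _ (conj hM.1 rM) rT) [] : weak_le B M (tits F (opp_face B)) by [].
  move=> i BM; rewrite !ffunE; case: ifP => Fi.
    by case: (sFM i) => e; [rewrite e eqxx in Fi|rewrite e].
  apply/eqP => e; have := Bnz i; move/eqP; lia.
Qed.
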